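(* Let $1\le k<n$. Every RYD in $\mathbb{Y}_{OG(k,2n)}$ is a $W^{OG(k,2n)}$-diagram, i.e. $\mathbb{Y}_{OG(k,2n)}\subseteq\Theta(k,2n)$.
   Context: Root system $D_n$: positive roots $e_a\pm e_b$ ($a<b$); simple roots $e_i-e_{i+1}$ ($i<n$), $e_{n-1}+e_n$; order $\alpha\le\beta$ iff $\beta-\alpha$ is a nonnegative integer combination of simple roots. $W^{OG(k,2n)}$ is the set of signed permutations $w=(y_1,\dots,y_{k-r},\overline{z_r},\dots,\overline{z_1},v_1,\dots,v_{n-k-1},\widehat{v_{n-k}})$ of $1,\dots,n$ with an even number of barred (negative) entries, $0\le r\le k$, $y_1<\dots<y_{k-r}$, $z_r>\dots>z_1$, $v_1<\dots<v_{n-k}$, $\widehat{v_{n-k}}\in\{v_{n-k},\overline{v_{n-k}}\}$ according to the parity of $r$. $w$ acts by $e_a\mapsto\pm e_{|w(a)|}$ (minus if barred); $\mathrm{Inv}(w)$ is the set of positive roots sent to negative roots, and $\mathbb{Y}_{OG(k,2n)}=\{\mathrm{Inv}(w)\}$. Base region: roots $e_a\pm e_b$ with $a\le k<b$; its $i$-th double-tailed diamond ($1\le i\le k$) consists of the $2n-2k$ roots $e_{k+1-i}\pm e_b$, $b>k$. Top region: roots $e_a+e_b$ with $a<b\le k$. A subset $S$ of the union of the two regions is a $W^{OG(k,2n)}$-diagram if it meets each region in a lower order ideal of that region and, for each top root $e_a+e_b$, $e_a+e_b\in S$ whenever $S$ contains more than $2n-2k$ roots of the double-tailed diamonds indexed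 by $a$ and $b$ (i.e. diamonds $k+1-a$ and $k+1-b$) combined, and $e_a+e_b\notin S$ whenever it contains fewer than $2n-2k$ of them. $\Theta(k,2n)$ is the set of such diagrams. *)

(* Defs.v *)
(* Conventions: coordinates/positions are 0-indexed internally:
   coordinate i : 'I_n stands for e_{i+1}; position a (0-indexed) of a signed
   permutation stands for position a+1. Entries of w are the (signed) values
   +-1..+-n as in the paper. *)
From HB Require Import structures.
From mathcomp Require Import all_boot all_order all_algebra.
Set Implicit Arguments. Unset Strict Implicit. Unset Printing Implicit Defensive.
Import Order.TTheory GRing.Theory Num.Theory.
Local Open Scope ring_scope.

(* a root candidate (a, b, plus): e_a + e_b if plus, e_a - e_b otherwise *)
Definition root (n : nat) := ('I_n * 'I_n * bool)%type.

Definition vec (n : nat) := {ffun 'I_n -> int}.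

Definition evec (n : nat) (p : nat) : vec n := [ffun i : 'I_n => ((i : nat) == p)%:R].

Definition rootvec (n : nat) (r : root n) : vec n :=
  if r.2 then evec n r.1.1 + evec n r.1.2 else evec n r.1.1 - evec n r.1.2.

Definition posroots (n : nat) : {set root n} := [set r : root n | r.1.1 < r.1.2]%N.

Definition simplevec (n : nat) (j : 'I_n) : vec n :=
  if (j.+1 < n)%N then evec n j - evec n j.+1 else evec n (n - 2) + evec n (n - 1).

Definition root_le (n : nat) (beta alpha : root n) : Prop :=
  exists c : 'I_n -> nat,
    rootvec alpha = rootvec beta + \sum_(j < n) simplevec j *+ c j.

(* signed permutation given as the sequence of its (signed) entries w(1..n);
   the linear action e_a |-> sgn(w(a)) e_{|w(a)|} *)
Definition act (n : nat) (w : seq int) (v : vec n) : vec n :=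
  [ffun p : 'I_n => \sum_(a < n)
      sgz (nth (0:int) w a) * ((`|nth (0:int) w a|%N == p.+1)%:R) * v a].

Definition is_negroot (n : nat) (v : vec n) : bool :=
  [exists r in posroots n, rootvec r == - v].

Definition Inv (n : nat) (w : seq int) : {set root n} :=
  [set r in posroots n | is_negroot (act w (rootvec r))].

Definition in_WOG (n k : nat) (w : seq int) : Prop :=
  [/\ size w = n,
      perm_eq [seq `|x|%N | x <- w] (iota 1 n),
      ~~ odd (count (fun x : int => x < 0) w) &
      exists r : nat, (r <= k)%N /\
        let ys := take (k - r) w in
        let zs := take r (drop (k - r) w) in
        let vs := drop k w in
        [/\ all (fun x : int => 0 < x) ys /\ sorted ltn [seq `|x|%N | x <- ys],
            all (fun x : int => x < 0) zs /\ sorted gtn [seq `|x|%N | x <- zs],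
            all (fun x : int => 0 < x) (take (n - k - 1) vs),
            sorted ltn [seq `|x|%N | x <- vs] &
            (last (0:int) vs < 0) = odd r]].

(* regions (1-indexed: base a <= k < b; top e_a + e_b, a < b <= k) *)
Definition base_region (n k : nat) : {set root n} :=
  [set r : root n | (r.1.1 < k <= r.1.2)%N].
Definition top_region (n k : nat) : {set root n} :=
  [set r : root n | r.2 && (r.1.1 < r.1.2 < k)%N].

(* roots e_a +- e_c with c > k: the double-tailed diamond indexed k+1-a *)
Definition diamond_of (n k : nat) (a : 'I_n) : {set root n} :=
  [set r : root n | (r.1.1 == a) && (k <= r.1.2)%N].

Definition lower_ideal_in (n : nat) (R S : {set root n}) : Prop :=
  forall alpha beta, alpha \in R -> beta \in R ->
    alpha \in S -> root_le beta alpha -> beta \in S.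

Definition is_Wdiagram (n k : nat) (S : {set root n}) : Prop :=
  [/\ S \subset base_region n k :|: top_region n k,
      lower_ideal_in (base_region n k) S,
      lower_ideal_in (top_region n k) S &
      forall t, t \in top_region n k ->
        let cnt := #|S :&: (diamond_of k t.1.1 :|: diamond_of k t.1.2)| in
        ((2 * n - 2 * k < cnt)%N -> t \in S) /\
        ((cnt < 2 * n - 2 * k)%N -> t \notin S)].

Definition in_Theta (n k : nat) (S : {set root n}) : Prop := is_Wdiagram k S.

(* Main.v *)
Require Import Defs.
From HB Require Import structures.
From mathcomp Require Import all_boot all_order all_algebra.
From mathcomp Require Import zify.
Set Implicit Arguments. Unset Strict Implicit. Unset Printing Implicit Defensive.
Import Order.TTheory GRing.Theory Num.Theory.
Local Open Scope ring_scope.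

Definition ind (b : bool) : int := if b then 1 else 0.

Lemma rootvec_val n (r : Defs.root n) (p : 'I_n) :
  rootvec r p = ind ((p:nat) == r.1.1) + (if r.2 then 1 else -1) * ind ((p:nat) == r.1.2).
Proof.
rewrite /rootvec /ind; case: r.2; rewrite /evec !ffunE; try (rewrite !ffunE); simpl;
  do 2 case: eqP => //= _; lia.
Qed.

Lemma indP (x y : nat) : (x = y /\ ind (x == y) = 1) \/ (x <> y /\ ind (x == y) = 0).
Proof. rewrite /ind; case: eqP; [left|right]; split => //. Qed.

Lemma oppvE n (v : vec n) p : (- v) p = - v p.
Proof. by rewrite !ffunE. Qed.

Lemma negroot_char n (P Q : 'I_n) (al be : int) : (P : nat) <> Q ->
  (al = 1 \/ al = -1) -> (be = 1 \/ be = -1) ->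
  is_negroot [ffun p : 'I_n => al * ind ((p:nat) == P) + be * ind ((p:nat) == Q)] =
  (if (P < Q)%N then al == -1 else be == -1).
Proof.
move=> hPQ hal hbe; apply/existsP/idP.
- move=> [[[a b] s] /andP [hr /eqP E]].
  rewrite /posroots inE /= in hr.
  have Ea := congr1 (fun f : vec n => f a) E; have Eb := congr1 (fun f : vec n => f b) E.
  move: Ea Eb; clear E; rewrite !rootvec_val oppvE !ffunE /=.
  have := indP a a; have := indP a b; have := indP b a; have := indP b b.
  have := indP a P; have := indP a Q; have := indP b P; have := indP b Q.
  case: s => /= *; case: hal => ?; case: hbe => ?; subst al be; case: ltnP => ?; apply/eqP; lia.
- case: ltnP => hPQ' /eqP hv.
  + exists ((P, Q), be == -1); rewrite /posroots inE /= hPQ' /=.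
    apply/eqP/ffunP => p; rewrite rootvec_val oppvE !ffunE /=.
    case: hal => ?; case: hbe => ?; subst al be; rewrite /ind;
    do 2 case: eqP => /= ?; lia.
  + exists ((Q, P), al == -1); rewrite /posroots inE /=.
    have -> : (Q < P)%N by lia.
    apply/eqP/ffunP => p; rewrite rootvec_val oppvE !ffunE /=.
    case: hal => ?; case: hbe => ?; subst al be; rewrite /ind;
    do 2 case: eqP => /= ?; lia.
Qed.

Lemma wog_facts n k w : (k < n)%N -> in_WOG n k w ->
  exists r, (r <= k)%N /\ size w = n /\
   (forall i, (i < n)%N -> (0 < absz (nth (0:int) w i) <= n)%N) /\
   (forall i j, (i < n)%N -> (j < n)%N -> absz (nth (0:int) w i)%N = absz (nth (0:int) w j)%N -> i = j) /\
   (forall i, (i < k - r)%N -> 0 < nth 0 w i) /\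
   (forall i, (k - r <= i < k)%N -> nth 0 w i < 0) /\
   (forall i, (k <= i < n.-1)%N -> 0 < nth 0 w i) /\
   (forall i j, (i < j < k - r)%N -> (absz (nth (0:int) w i) < absz (nth (0:int) w j))%N) /\
   (forall i j, (k - r <= i < j)%N -> (j < k)%N -> (absz (nth (0:int) w j) < absz (nth (0:int) w i))%N) /\
   (forall i j, (k <= i < j)%N -> (j < n)%N -> (absz (nth (0:int) w i) < absz (nth (0:int) w j))%N).
Proof.
move=> hkn [hs hp _ [r [hrk [[hy1 hy2] [hz1 hz2] hv1 hv2 _]]]].
have f1 : (forall i, (i < n)%N -> (0 < absz (nth (0:int) w i) <= n)%N).
{ move=> i hi; have : absz (nth (0:int) w i)%N \in iota 1 n.
    by rewrite -(perm_mem hp); apply/mapP; exists (nth 0 w i) => //; apply: mem_nth; rewrite hs.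
  by rewrite mem_iota; lia. }
have f2 : (forall i j, (i < n)%N -> (j < n)%N -> absz (nth (0:int) w i)%N = absz (nth (0:int) w j)%N -> i = j).
{ move=> i j hi hj e.
  have hu : uniq [seq `|x|%N | x <- w] by rewrite (perm_uniq hp) iota_uniq.
  have := nth_uniq 0%N (i:=i) (j:=j) _ _ hu; rewrite !size_map hs => /(_ hi hj).
  by rewrite !(nth_map 0) ?hs // e eqxx => /esym/eqP. }
have f3 : (forall i, (i < k - r)%N -> 0 < nth 0 w i).
{ move=> i hi; move/all_nthP: hy1 => /(_ 0 i); rewrite nth_take // size_take; apply.
  by case: ifP; lia. }
have f4 : (forall i, (k - r <= i < k)%N -> nth 0 w i < 0).
{ move=> i /andP [h1 h2]; move/all_nthP: hz1 => /(_ 0 (i - (k - r))%N).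
  rewrite nth_take ?nth_drop; last by lia.
  have -> : (k - r + (i - (k - r)) = i)%N by lia.
  apply; rewrite size_take size_drop hs; case: ifP; lia. }
have f5 : (forall i, (k <= i < n.-1)%N -> 0 < nth 0 w i).
{ move=> i /andP [h1 h2]; move/all_nthP: hv1 => /(_ 0 (i - k)%N).
  rewrite nth_take ?nth_drop; last by lia.
  have -> : (k + (i - k) = i)%N by lia.
  apply; rewrite size_take size_drop hs; case: ifP; lia. }
have f6 : (forall i j, (i < j < k - r)%N -> (absz (nth (0:int) w i) < absz (nth (0:int) w j))%N).
{ move=> i j /andP [h1 h2].
  have := sorted_ltn_nth ltn_trans 0%N hy2; rewrite size_map size_take.
  have hsz : (k - r < size w)%N by lia.
  rewrite hsz => /(_ i j); rewrite !inE !(nth_map 0) ?size_take ?hsz // ?nth_take //; try lia.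
  by apply; lia. }
have f7 : (forall i j, (k - r <= i < j)%N -> (j < k)%N -> (absz (nth (0:int) w j) < absz (nth (0:int) w i))%N).
{ move=> i j /andP [h1 h2] h3.
  have gt_tr : transitive gtn by move=> ? ? ?; rewrite /gtn /=; lia.
  have := sorted_ltn_nth gt_tr 0%N hz2; rewrite size_map size_take size_drop.
  have hsz : (r <= size w - (k - r))%N by lia.
  have -> : (if (r < size w - (k - r))%N then r else size w - (k - r))%N = r by case: ifP; lia.
  move=> /(_ (i - (k - r)) (j - (k - r)))%N; rewrite !inE.
  rewrite !(nth_map 0) ?size_take ?size_drop; try (case: ifP; lia).
  rewrite !nth_take ?nth_drop; try lia.
  have -> : (k - r + (i - (k - r)) = i)%N by lia.
  have -> : (k - r + (j - (k - r)) = j)%N by lia.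
  move=> H.
  2,3: case: ifP => _.
  apply: H.
  all: rewrite ?hs; lia. }
have f8 : (forall i j, (k <= i < j)%N -> (j < n)%N -> (absz (nth (0:int) w i) < absz (nth (0:int) w j))%N).
{ move=> i j /andP [h1 h2] h3.
  have := sorted_ltn_nth ltn_trans 0%N hv2; rewrite size_map size_drop.
  move=> /(_ (i - k) (j - k))%N; rewrite !inE.
  rewrite !(nth_map 0) ?size_drop; rewrite ?hs; try lia.
  rewrite !nth_drop.
  have -> : (k + (i - k) = i)%N by lia.
  have -> : (k + (j - k) = j)%N by lia.
  by apply; rewrite ?hs; lia. }
exists r; exact (conj hrk (conj hs (conj f1 (conj f2 (conj f3 (conj f4 (conj f5 (conj f6 (conj f7 f8))))))))).
Qed.

Lemma sum_ind n (F : 'I_n -> int) (i : 'I_n) :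
  \sum_(a < n) F a * ind ((a:nat) == (i:nat)) = F i.
Proof.
rewrite (bigD1 i) //= big1 => [|a hai]; first by rewrite /ind eqxx mulr1 addr0.
rewrite /ind; case: eqP => [h|]; last by rewrite mulr0.
by exfalso; move/eqP: hai; apply; apply: val_inj.
Qed.

Lemma sum_two n (G : 'I_n -> int) (i j : 'I_n) (c : int) :
  \sum_(a < n) G a * (ind ((a:nat) == (i:nat)) + c * ind ((a:nat) == (j:nat))) = G i + c * G j.
Proof.
under eq_bigr do rewrite mulrDr.
rewrite big_split /= sum_ind; congr (_ + _).
under eq_bigr do rewrite mulrCA.
by rewrite -mulr_sumr sum_ind.
Qed.

Lemma act_root n w (i j : 'I_n) s :
  act w (rootvec ((i, j), s)) = [ffun p : 'I_n =>
     sgz (nth (0:int) w i) * (`|nth (0:int) w i|%N == p.+1)%:R +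
     (if s then 1 else -1) * (sgz (nth (0:int) w j) * (`|nth (0:int) w j|%N == p.+1)%:R)].
Proof.
apply/ffunP => p; rewrite !ffunE.
under eq_bigr do rewrite rootvec_val.
by rewrite sum_two.
Qed.

Definition INV (w : seq int) (i j : nat) (s : bool) : bool :=
  if (absz (nth (0:int) w i) < absz (nth (0:int) w j))%N then nth (0:int) w i < 0
  else ((nth (0:int) w j < 0) == s).

Lemma sgz_m1 (x : int) : x != 0 -> (sgz x == -1) = (x < 0).
Proof. by move=> hx; rewrite /sgz (negbTE hx); case: ifP. Qed.

Lemma sgz_pm (x : int) : x != 0 -> sgz x = 1 \/ sgz x = -1.
Proof. by move=> hx; rewrite /sgz (negbTE hx); case: ifP; auto. Qed.

Lemma inv_char n w :
  (forall i, (i < n)%N -> (0 < absz (nth (0:int) w i) <= n)%N) ->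
  (forall i j, (i < n)%N -> (j < n)%N -> absz (nth (0:int) w i)%N = absz (nth (0:int) w j)%N -> i = j) ->
  forall (i j : 'I_n) s, (((i, j), s) \in Inv n w) = (i < j)%N && INV w i j s.
Proof.
move=> f1 f2 i j s.
rewrite /Inv inE /posroots inE /=; case: ltnP => hij //=.
have hi := f1 i (ltn_ord i); have hj := f1 j (ltn_ord j).
have hPn : (`|nth (0:int) w i| - 1 < n)%N by lia.
have hQn : (`|nth (0:int) w j| - 1 < n)%N by lia.
have hneq : `|nth (0:int) w i|%N <> `|nth (0:int) w j|%N by move=> /(f2 _ _ (ltn_ord i) (ltn_ord j)); lia.
have hxi : nth (0:int) w i != 0 by apply/eqP => h; move: hi; rewrite h.
have hxj : nth (0:int) w j != 0 by apply/eqP => h; move: hj; rewrite h.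
have hbe0 : (if s then 1 else -1) * sgz (nth (0:int) w j) = 1 \/
   (if s then 1 else -1) * sgz (nth (0:int) w j) = -1.
  by case: (sgz_pm hxj) => ->; case: s; auto.
set al := sgz (nth (0:int) w i).
set be := (if s then 1 else -1) * sgz (nth (0:int) w j).
have -> : act w (rootvec (i, j, s)) =
   [ffun p : 'I_n => al * ind ((p:nat) == Ordinal hPn) + be * ind ((p:nat) == Ordinal hQn)].
  rewrite act_root; apply/ffunP => p; rewrite !ffunE /= /al /be -mulrA; congr (_ * _ + _ * (_ * _)).
  + by rewrite /ind; do 2 case: eqP => //=; lia.
  + by rewrite /ind; do 2 case: eqP => //=; lia.
rewrite negroot_char /=; last first.
- exact: hbe0.
- exact: sgz_pm.
- lia.
clear hbe0; subst al be; rewrite /INV.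
have -> : (`|nth (0:int) w i| - 1 < `|nth (0:int) w j| - 1)%N = (`|nth (0:int) w i| < `|nth (0:int) w j|)%N by lia.
case: ifP => _; first by rewrite sgz_m1.
case: s; first by rewrite mul1r sgz_m1.
rewrite mulN1r -sgz_m1 //; case: (sgz_pm hxj) => ->; done.
Qed.

Definition Lw n (wt : nat -> int) (v : vec n) : int := \sum_(p < n) wt p * v p.

Lemma Lw_add n wt (u v : vec n) : Lw wt (u + v) = Lw wt u + Lw wt v.
Proof. by rewrite /Lw -big_split /=; apply: eq_bigr => p _; rewrite !ffunE mulrDr. Qed.

Lemma Lw_opp n wt (v : vec n) : Lw wt (- v) = - Lw wt v.
Proof. by rewrite /Lw -sumrN; apply: eq_bigr => p _; rewrite !ffunE mulrN. Qed.

Lemma Lw_muln n wt (v : vec n) c : Lw wt (v *+ c) = Lw wt v *+ c.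
Proof.
elim: c => [|c IH]; first by rewrite !mulr0n /Lw big1 // => p _; rewrite !ffunE mulr0.
by rewrite !mulrS Lw_add IH.
Qed.

Lemma Lw_sum n wt (F : 'I_n -> vec n) : Lw wt (\sum_(j < n) F j) = \sum_(j < n) Lw wt (F j).
Proof.
apply: (big_morph (Lw wt)); first exact: Lw_add.
by rewrite /Lw big1 // => p _; rewrite !ffunE mulr0.
Qed.

Lemma Lw_evec n wt q : (q < n)%N -> Lw wt (evec n q) = wt q.
Proof.
move=> hq; rewrite /Lw.
have := sum_ind (fun p : 'I_n => wt p) (Ordinal hq) => /= <-.
by apply: eq_bigr => p _; rewrite !ffunE /ind; case: eqP.
Qed.

Lemma Lw_root n wt (r : Defs.root n) :
  Lw wt (rootvec r) = wt r.1.1 + (if r.2 then 1 else -1) * wt r.1.2.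
Proof.
rewrite /rootvec; case: r.2.
- by rewrite Lw_add !Lw_evec // mul1r.
- by rewrite Lw_add Lw_opp !Lw_evec // mulN1r.
Qed.

Lemma root_le_Lw n wt (beta alpha : Defs.root n) :
  (forall j : 'I_n, 0 <= Lw wt (simplevec j)) -> root_le beta alpha ->
  Lw wt (rootvec beta) <= Lw wt (rootvec alpha).
Proof.
move=> hs [c ->]; rewrite Lw_add Lw_sum lerDl.
by apply: sumr_ge0 => j _; rewrite Lw_muln mulrn_wge0.
Qed.

Lemma simple_pref n m (j : 'I_n) : 0 <= Lw (fun p => ind (p < m)%N) (simplevec j).
Proof.
rewrite /simplevec; case: ifP => h.
- rewrite Lw_add Lw_opp !Lw_evec //; rewrite /ind; do 2 case: ifP; lia.
- have hn := ltn_ord j; rewrite Lw_add !Lw_evec; try lia.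
  rewrite /ind; do 2 case: ifP; lia.
Qed.

Definition wt' (n : nat) (p : nat) : int := if (p < n.-1)%N then 1 else -1.

Lemma simple_last n (j : 'I_n) : (2 <= n)%N -> 0 <= Lw (wt' n) (simplevec j).
Proof.
move=> h2; rewrite /simplevec /wt'; case: ifP => h.
- rewrite Lw_add Lw_opp !Lw_evec //; do 2 case: ifP; lia.
- have hn := ltn_ord j; rewrite Lw_add !Lw_evec; try lia.
  do 2 case: ifP; lia.
Qed.

Lemma indlt (x m : nat) : ((x < m)%N /\ ind (x < m)%N = 1) \/ ((m <= x)%N /\ ind (x < m)%N = 0).
Proof. rewrite /ind; case: ltnP; auto. Qed.

Lemma le_facts n (a b a' b' : 'I_n) s s' : (2 <= n)%N -> (a < b)%N -> (a' < b')%N ->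
  root_le ((a', b'), s') ((a, b), s) ->
  [/\ (a <= a')%N,
      ~~ s -> ~~ s',
      ~~ s -> (a' <= b)%N -> (b' <= b)%N,
      s -> s' -> (b <= b')%N &
      s -> ~~ s' -> (b : nat) = n.-1 -> (b' : nat) <> n.-1].
Proof.
move=> h2 hab hab' hle.
have hP m := root_le_Lw (fun j => simple_pref m j) hle.
have hL := root_le_Lw (fun j => simple_last j h2) hle.
move: hL; rewrite !Lw_root /= /wt' => hL; clear hle.
have hna := ltn_ord a; have hnb := ltn_ord b; have hna' := ltn_ord a'; have hnb' := ltn_ord b'.
split.
- have := hP a'.+1; rewrite !Lw_root /=.
  have := indlt a a'.+1; have := indlt b a'.+1; have := indlt a' a'.+1; have := indlt b' a'.+1.
  clear hP hL; case: s; case: s' => /=; lia.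
- have := hP n; rewrite !Lw_root /=.
  have := indlt a n; have := indlt b n; have := indlt a' n; have := indlt b' n.
  clear hP hL; case: s; case: s' => /=; lia.
- move=> hs ha'b; have := hP b.+1; have := hP n; rewrite !Lw_root /=.
  have := indlt a n; have := indlt b n; have := indlt a' n; have := indlt b' n.
  have := indlt a b.+1; have := indlt b b.+1; have := indlt a' b.+1; have := indlt b' b.+1.
  move: hs; clear hP hL; case: s; case: s' => /=; lia.
- move=> hs hs'; have := hP b'.+1; rewrite !Lw_root /=.
  have := indlt a b'.+1; have := indlt b b'.+1; have := indlt a' b'.+1; have := indlt b' b'.+1.
  move: hs hs'; clear hP hL; case: s; case: s' => /=; lia.
- move=> hs hs' hb hb'; move: hL hs hs'; clear hP.
  have e1 : (a < n.-1)%N by rewrite -hb.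
  have e2 : (a' < n.-1)%N by rewrite -hb'.
  rewrite e1 e2 hb hb' ltnn; case: s; case: s' => //=; lia.
Qed.

Ltac flia := intros; first [lia | exfalso; lia].

Definition Facts n k (w : seq int) r :=
  (r <= k)%N /\ size w = n /\
   (forall i, (i < n)%N -> (0 < absz (nth (0:int) w i) <= n)%N) /\
   (forall i j, (i < n)%N -> (j < n)%N -> absz (nth (0:int) w i)%N = absz (nth (0:int) w j)%N -> i = j) /\
   (forall i, (i < k - r)%N -> 0 < nth (0:int) w i) /\
   (forall i, (k - r <= i < k)%N -> nth (0:int) w i < 0) /\
   (forall i, (k <= i < n.-1)%N -> 0 < nth (0:int) w i) /\
   (forall i j, (i < j < k - r)%N -> (absz (nth (0:int) w i) < absz (nth (0:int) w j))%N) /\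
   (forall i j, (k - r <= i < j)%N -> (j < k)%N -> (absz (nth (0:int) w j) < absz (nth (0:int) w i))%N) /\
   (forall i j, (k <= i < j)%N -> (j < n)%N -> (absz (nth (0:int) w i) < absz (nth (0:int) w j))%N).

Lemma L_sub n k w r : Facts n k w r -> (k < n)%N ->
  Inv n w \subset base_region n k :|: top_region n k.
Proof.
move=> [hrk [hs [f1 [f2 [f3 [f4 [f5 [f6 [f7 f8]]]]]]]]] hkn.
apply/subsetP => -[[i j] s]; rewrite inv_char // => /andP [hij].
rewrite !inE /= /INV => hI.
have hjn := ltn_ord j.
case: (ltnP i k) => hik; case: (ltnP j k) => hjk /=; rewrite ?andbT ?andbF ?orbF //= ?hij ?andbT.
3: { move: hI; case: ltnP => hc hI; have := f5 i ltac:(lia); have := f8 i j ltac:(lia) hjn; flia. }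
2: { exfalso; flia. }
case: s hI => //; case: ltnP => hc hI.
{ case: (ltnP j (k - r)) => hj; [have := f3 i ltac:(lia); have := f6 i j ltac:(lia); flia|].
  case: (ltnP i (k - r)) => hi; [have := f3 i ltac:(lia); flia|].
  have := f7 i j ltac:(lia) ltac:(lia); flia. }
case: (ltnP j (k - r)) => hj; [have := f3 i ltac:(lia); have := f6 i j ltac:(lia); flia|].
case: (ltnP i (k - r)) => hi; [have := f3 i ltac:(lia); have := f4 j ltac:(lia); flia|].
have := f7 i j ltac:(lia) ltac:(lia); have := f4 j ltac:(lia); flia.
Qed.

Lemma mono_facts n k w r : Facts n k w r ->
  [/\ (forall i j, (i <= j)%N -> (j < k - r)%N -> (absz (nth (0:int) w i) <= absz (nth (0:int) w j))%N),
      (forall i j, (k - r <= i)%N -> (i <= j)%N -> (j < k)%N -> (absz (nth (0:int) w j) <= absz (nth (0:int) w i))%N) &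
      (forall i j, (k <= i)%N -> (i <= j)%N -> (j < n)%N -> (absz (nth (0:int) w i) <= absz (nth (0:int) w j))%N)].
Proof.
move=> [hrk [hs [f1 [f2 [f3 [f4 [f5 [f6 [f7 f8]]]]]]]]].
split.
- move=> i j h1 h2; case: (ltngtP i j) => h; [have := f6 i j ltac:(lia); lia | lia | by subst].
- move=> i j h1 h2 h3; case: (ltngtP i j) => h; [have := f7 i j ltac:(lia) h3; lia | lia | by subst].
- move=> i j h1 h2 h3; case: (ltngtP i j) => h; [have := f8 i j ltac:(lia) h3; lia | lia | by subst].
Qed.

Lemma L_top n k w r : Facts n k w r -> (k < n)%N ->
  lower_ideal_in (top_region n k) (Inv n w).
Proof.
move=> F hkn; have [m6 m7 m8] := mono_facts F.
move: F => [hrk [hs [f1 [f2 [f3 [f4 [f5 [f6 [f7 f8]]]]]]]]].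
move=> [[a b] s] [[a' b'] s'] hta htb; rewrite !inv_char // => /andP [_ hI] hle.
move: hta htb; rewrite !inE /= => /andP [hs1 hab] /andP [hs1' hab'].
rewrite /INV in hI *.
have h2n : (2 <= n)%N by lia.
have hab1 : (a < b)%N by lia.
have hab1' : (a' < b')%N by lia.
have [hA _ _ hB _] := le_facts h2n hab1 hab1' hle.
have hB' := hB hs1 hs1'.
rewrite /is_true in hs1 hs1'; subst s s'; apply/andP; split; first lia.
case: (ltnP b (k - r)) => hb.
  move: hI; case: ltnP => hc hI; [have := f3 a ltac:(lia); flia|].
  have := f6 a b ltac:(lia); flia.
have xb' := f4 b' ltac:(lia).
case: (ltnP a' (k - r)) => ha'.
  move: hI; case: ltnP => hc hI; [have := f3 a ltac:(lia); flia|].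
  have := m6 a a' hA ha'; have := m7 b b' ltac:(lia) hB' ltac:(lia).
  case: ltnP => hc'; flia.
have xa' := f4 a' ltac:(lia).
case: ltnP => _; flia.
Qed.

Lemma L_base n k w r : Facts n k w r -> (1 <= k)%N -> (k < n)%N ->
  lower_ideal_in (base_region n k) (Inv n w).
Proof.
move=> F hk1 hkn; have [m6 m7 m8] := mono_facts F.
move: F => [hrk [hs [f1 [f2 [f3 [f4 [f5 [f6 [f7 f8]]]]]]]]].
move=> [[a b] s] [[a' b'] s'] hta htb; rewrite !inv_char // => /andP [_ hI] hle.
move: hta htb; rewrite !inE /= => hta htb.
have h2n : (2 <= n)%N by lia.
have hab1 : (a < b)%N by lia.
have hab1' : (a' < b')%N by lia.
have [G1 G2 G3 G4 G5] := le_facts h2n hab1 hab1' hle.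
clear hle.
apply/andP; split; first lia.
rewrite /INV in hI *.
have hbn := ltn_ord b; have hbn' := ltn_ord b'.
have := f3 a; have := f3 a'; have := f4 a; have := f4 a'; have := f5 b; have := f5 b'.
have := f1 a; have := f1 a'; have := f1 b; have := f1 b'.
have := m6 a a'; have := m7 a a'.
case: (ltngtP b b') => hbb'; [have := m8 b b' | have := m8 b' b | move/val_inj: hbb' => hbb'; subst b'].
- move: hI; case: (ltnP (absz (nth (0:int) w a)) (absz (nth (0:int) w b))) => hc hI; case: (ltnP (absz (nth (0:int) w a')) (absz (nth (0:int) w b'))) => hc2; case: s s' G2 G3 G4 G5 hI => [] [] /=; flia.
- move: hI; case: (ltnP (absz (nth (0:int) w a)) (absz (nth (0:int) w b))) => hc hI; case: (ltnP (absz (nth (0:int) w a')) (absz (nth (0:int) w b'))) => hc2; case: s s' G2 G3 G4 G5 hI => [] [] /=; flia.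
- move: hI; case: (ltnP (absz (nth (0:int) w a)) (absz (nth (0:int) w b))) => hc hI; case: (ltnP (absz (nth (0:int) w a')) (absz (nth (0:int) w b))) => hc2; case: s s' G2 G3 G4 G5 hI => [] [] /=; flia.
Qed.

Lemma card_diam n k w (x : 'I_n) :
  (forall i, (i < n)%N -> (0 < absz (nth (0:int) w i) <= n)%N) ->
  (forall i j, (i < n)%N -> (j < n)%N -> absz (nth (0:int) w i)%N = absz (nth (0:int) w j)%N -> i = j) ->
  (x < k)%N ->
  #|Inv n w :&: diamond_of k x| =
    (\sum_(c < n) \sum_(s : bool) ((k <= c)%N && INV w x c s : nat))%N.
Proof.
move=> f1 f2 hxk.
pose C := [set cs : 'I_n * bool | (k <= cs.1)%N && INV w x cs.1 cs.2].
have -> : Inv n w :&: diamond_of k x = [set ((x, cs.1), cs.2) | cs in C].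
  apply/setP => -[[i c] s]; rewrite inE.
  apply/andP/imsetP.
  - move=> [hI]; rewrite /diamond_of inE /= => /andP [/eqP hi hc].
    subst i; exists (c, s) => //.
    by move: hI; rewrite inv_char // => /andP [_ hI]; rewrite inE /= hc.
  - move=> [[c' s']]; rewrite inE /= => /andP [hc hI] [-> -> ->].
    split; last by rewrite /diamond_of inE /= eqxx hc.
    rewrite inv_char // hI andbT; lia.
rewrite card_imset; last by move=> [c1 s1] [c2 s2] [-> ->].
rewrite pair_big /= -sum1_card big_mkcond /=.
by apply: eq_bigr => -[c s] _; rewrite inE; case: (_ && _).
Qed.

Lemma sum_two_cond n k : (\sum_(c < n) (if (k <= c)%N then 2 else 0))%N = (2 * (n - k))%N.
Proof.
elim: n => [|n IH]; first by rewrite big_ord0.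
rewrite big_ord_recr /= IH; case: leqP => h; lia.
Qed.

Lemma L_cnt n k w r : Facts n k w r -> (1 <= k)%N -> (k < n)%N ->
  forall t, t \in top_region n k ->
    let cnt := #|Inv n w :&: (diamond_of k t.1.1 :|: diamond_of k t.1.2)| in
    ((2 * n - 2 * k < cnt)%N -> t \in Inv n w) /\
    ((cnt < 2 * n - 2 * k)%N -> t \notin Inv n w).
Proof.
move=> F hk1 hkn; have [m6 m7 m8] := mono_facts F.
move: F => [hrk [hs [f1 [f2 [f3 [f4 [f5 [f6 [f7 f8]]]]]]]]].
move=> [[a b] s] ht /=; move: ht; rewrite inE /= => /andP [hs1 hab].
rewrite /is_true in hs1; subst s.
have hak : (a < k)%N by lia.
have hbk : (b < k)%N by lia.
have hcnt : #|Inv n w :&: (diamond_of k a :|: diamond_of k b)| =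
   (\sum_(c < n) (\sum_(s : bool) ((k <= c)%N && INV w a c s : nat) +
                  \sum_(s : bool) ((k <= c)%N && INV w b c s : nat)))%N.
  rewrite big_split /= -!card_diam // setIUr.
  apply/eqP; rewrite -cardsUI -[X in X == _]addn0 eqn_add2l eq_sym cards_eq0; apply/eqP/setP => q.
  rewrite in_set0 !in_setI; apply/negbTE/negP => /andP [/andP [_ hA] /andP [_ hB]].
  move: hA hB; rewrite /diamond_of !inE => /andP [/eqP h1 _] /andP [/eqP h2 _].
  have eab : (a : nat) = b by rewrite -h1 -h2.
  lia.
rewrite hcnt inv_char // /=.
have hab1 : (a < b)%N by lia.
rewrite hab1 /=.
have key : forall c : 'I_n, (k <= c)%N ->
   (INV w a b true -> 2 <= \sum_(s : bool) (INV w a c s : nat) + \sum_(s : bool) (INV w b c s : nat))%N /\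
   (~~ INV w a b true -> \sum_(s : bool) (INV w a c s : nat) + \sum_(s : bool) (INV w b c s : nat) <= 2)%N.
  move=> c hc; rewrite !big_bool /= /INV.
  have := f3 a; have := f3 b; have := f4 a; have := f4 b; have := f6 a b; have := f7 a b.
  case: (ltnP (absz (nth (0:int) w a)) (absz (nth (0:int) w b))) => h1;
  case: (ltnP (absz (nth (0:int) w a)) (absz (nth (0:int) w c))) => h2;
  case: (ltnP (absz (nth (0:int) w b)) (absz (nth (0:int) w c))) => h3; lia.
have E2 : (2 * n - 2 * k = \sum_(c < n) (if (k <= c)%N then 2 else 0))%N by rewrite sum_two_cond; lia.
rewrite E2.
case: (boolP (INV w a b true)) => hI.
  split => // hlt; exfalso; move: hlt; apply/negP; rewrite -leqNgt.
  apply: leq_sum => c _; case: (leqP k c) => hc /=; last by [].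
  by case: (key c hc) => /(_ hI).
split => // hlt; exfalso; move: hlt; apply/negP; rewrite -leqNgt.
apply: leq_sum => c _; case: (leqP k c) => hc /=; last by rewrite !big_bool.
by case: (key c hc) => _ /(_ hI).
Qed.

Unset Implicit Arguments.
Local Close Scope ring_scope.

Theorem lemma3p13 (n k : nat) (hk1 : (1 <= k)%N) (hkn : (k < n)%N) (w : seq int) :
  in_WOG n k w -> in_Theta k (Inv n w).
Proof.
move=> hW; have [r F] := wog_facts hkn hW.
split.
- exact: (L_sub F hkn).
- exact: (L_base F hk1 hkn).
- exact: (L_top F hkn).
- exact: (L_cnt F hk1 hkn).
Qed.
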